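(* Let $m$ be an odd positive integer and $n$ a positive integer. Then there is no non-symmetric tensor $\mathbb{A}\in T_{m,n}$ that is a $P$ tensor.
   Context: $T_{m,n}$ denotes the set of real $m$th order $n$-dimensional tensors $\mathbb{A}=(a_{i_1i_2\ldots i_m})$ with $i_j\in[n]=\{1,\ldots,n\}$. A tensor is symmetric if its entries $a_{i_1\ldots i_m}$ are invariant under any permutation of the indices $i_1,\ldots,i_m$. For $x\in\mathbb{R}^n$, $(\mathbb{A}x^{m-1})_i=\sum_{i_2,\ldots,i_m=1}^n a_{ii_2\ldots i_m}x_{i_2}\cdots x_{i_m}$, $i\in[n]$. A tensor $\mathbb{A}\in T_{m,n}$ is a $P$ tensor if for every nonzero $x\in\mathbb{R}^n$, $\max_{i\in[n]} x_i(\mathbb{A}x^{m-1})_i>0$. *)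

(* Defs.v *)
From mathcomp Require Import all_boot all_order all_algebra all_fingroup.
Set Implicit Arguments. Unset Strict Implicit. Unset Printing Implicit Defensive.
Import Order.TTheory GRing.Theory Num.Theory.
Local Open Scope ring_scope.

(* A real m-th order n-dimensional tensor: entries a_{i_1 ... i_m}, indexed by
   maps 'I_m -> 'I_n (position k |-> index i_{k+1}). *)
Definition tensor (R : Type) (m n : nat) := {ffun 'I_m -> 'I_n} -> R.

Definition symmetric_tensor (R : Type) (m n : nat) (A : tensor R m n) : Prop :=
  forall (s : 'S_m) (f : {ffun 'I_m -> 'I_n}), A [ffun k => f (s k)] = A f.

(* (A x^{m-1})_i = sum_{i_2..i_m} a_{i i_2 .. i_m} x_{i_2} ... x_{i_m}:
   sum over index maps f whose first position (k = 0) is i, of A f times the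
   product of x at the remaining positions. *)
Definition tensor_apply (R : numDomainType) (m n : nat) (A : tensor R m n)
  (x : 'I_n -> R) (i : 'I_n) : R :=
  \sum_(f : {ffun 'I_m -> 'I_n} | [forall k : 'I_m, (val k == 0%N) ==> (f k == i)])
     A f * \prod_(k : 'I_m | val k != 0%N) x (f k).

Definition P_tensor (R : realDomainType) (m n : nat) (A : tensor R m n) : Prop :=
  forall x : 'I_n -> R, (exists i, x i != 0) ->
    exists i : 'I_n, 0 < x i * tensor_apply A x i.

(* Main.v *)
Require Import Defs.
From mathcomp Require Import all_boot all_order all_algebra all_fingroup.
Import Order.TTheory GRing.Theory Num.Theory.
Local Open Scope ring_scope.

Lemma card_nz (R0 : realFieldType) (m : nat) : odd m ->
  (-1 : R0) ^+ #|(fun k : 'I_m => val k != 0%N)| = 1.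
Proof.
case: m => [//|m'] /= om.
have -> : #|(fun k : 'I_m'.+1 => val k != 0%N)| = m'.
  transitivity #|predC1 (@ord0 m')|; last by rewrite cardC1 card_ord.
  by apply: eq_card => k; rewrite !inE -val_eqE.
by rewrite -signr_odd (negbTE om) expr0.
Qed.

Lemma apply_neg (R : realFieldType) (m n : nat) (A : tensor R m n)
  (x : 'I_n -> R) (i : 'I_n) : odd m ->
  tensor_apply A (fun j => - x j) i = tensor_apply A x i.
Proof.
move=> om; rewrite /tensor_apply; apply: eq_bigr => f _; congr (_ * _).
rewrite (prodrN (fun k : 'I_m => val k != 0%N)).
by rewrite card_nz // mul1r.
Qed.

Theorem corollary2p2 (R : realFieldType) (m n : nat) :
  odd m -> (0 < m)%N -> (0 < n)%N ->
  ~ (exists A : tensor R m n, ~ symmetric_tensor A /\ P_tensor A).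
Proof.
move=> om m0 n0 [A [_ PA]].
pose i0 : 'I_n := Ordinal n0.
pose e := fun j : 'I_n => if j == i0 then (1 : R) else 0.
have ne : exists i, e i != 0 by exists i0; rewrite /e eqxx oner_neq0.
have ne' : exists i, - e i != 0 by exists i0; rewrite /e eqxx oppr_eq0 oner_neq0.
have [i Hi] := PA e ne.
have [i' Hi'] := PA _ ne'.
rewrite apply_neg // in Hi'.
have ei : forall j, 0 < e j * tensor_apply A e j \/ 0 < - e j * tensor_apply A e j -> j = i0.
  move=> j; rewrite /e; case: eqP => // _; rewrite oppr0 !mul0r ltxx; by case.
have E1 := ei i (or_introl Hi); have E2 := ei i' (or_intror Hi').
subst i i'.
by move: Hi'; rewrite mulNr oppr_gt0 ltNge (ltW Hi).
Qed.
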